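(* Let $\mathbf{O}\,\dot\cup\,\{S\}$ be a finite set of categorical variables, $\hat{s}$ a fixed value of $S$, and $\mathcal{G}$ a DAG over $\mathbf{O}\cup\{S\}$ in which $S$ has no children. Let $P$ be a distribution over $\mathbf{O}$ such that $p(\mathrm{pa}_{\mathcal{G}}(S)=\mathbf{z})>0$ for every value $\mathbf{z}$ of $\mathrm{pa}_{\mathcal{G}}(S)$. Then $$P\in\mathbf{BN}(\mathcal{G})[^{S=\hat{s}}\iff P[^{\mathrm{pa}_{\mathcal{G}}(S)}\in\mathbf{BN}(\mathcal{G}_{\mathbf{O}})[^{\mathrm{pa}_{\mathcal{G}}(S)},$$ where $\mathcal{G}_{\mathbf{O}}$ is the induced subgraph of $\mathcal{G}$ on $\mathbf{O}$.
   Context: $\mathbf{BN}(\mathcal{H})$ for a DAG $\mathcal{H}$ is the set of distributions over its nodes satisfying the Markov condition (each variable independent of its non-descendant non-parents given its parents; equivalently $p(\mathbf{x})=\prod_X p(x\mid\mathrm{pa}_{\mathcal{H}}(X))$). For a model $\mathbf{M}$ over $\mathbf{O}\cup\{S\}$, $\mathbf{M}[^{S=\hat{s}}$ is the set of distributions $Q$ over $\mathbf{O}$ such that there is $R\in\mathbf{M}$ with $r(\hat{s})>0$ and $q(\mathbf{o})=r(\mathbf{o}\mid\hat{s})$. For a distribution $P$ over $\mathbf{O}$ and $\mathbf{C}\subseteq\mathbf{O}$, $P[^{\mathbf{C}}$ denotes the conditional distribution of $\mathbf{O}\setminus\mathbf{C}$ given $\mathbf{C}$ under $P$; for a model $\mathbf{M}$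 over $\mathbf{O}$, $\mathbf{M}[^{\mathbf{C}}$ is the set of conditional distributions $Q$ of $\mathbf{O}\setminus\mathbf{C}$ given $\mathbf{C}$ for which there is $R\in\mathbf{M}$ with $r(\mathbf{c})>0$ for all values $\mathbf{c}$ and $q(\cdot\mid\mathbf{c})=r(\cdot\mid\mathbf{c})$. *)

(* Defs.v *)
From HB Require Import structures.
From mathcomp Require Import all_boot all_order all_algebra.
Set Implicit Arguments. Unset Strict Implicit. Unset Printing Implicit Defensive.
Import Order.TTheory GRing.Theory Num.Theory.
Local Open Scope ring_scope.

Definition assign (I : finType) (dom : I -> finType) : finType :=
  {dffun forall i : I, dom i}.

Definition is_dist (R : realFieldType) (T : finType) (p : T -> R) : Prop :=
  (forall t, 0 <= p t) /\ \sum_t p t = 1.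

Definition marg (R : realFieldType) (I : finType) (dom : I -> finType)
  (p : assign dom -> R) (A : {set I}) (x : assign dom) : R :=
  \sum_(y : assign dom | [forall i in A, y i == x i]) p y.

(* A DAG is given by its edge relation: G u v means u -> v. *)
Definition acyclic (I : finType) (G : rel I) : Prop :=
  forall u v, G u v -> ~~ connect G v u.

Definition pa (I : finType) (G : rel I) (v : I) : {set I} := [set u | G u v].

Definition BN (R : realFieldType) (I : finType) (dom : I -> finType)
  (G : rel I) (p : assign dom -> R) : Prop :=
  is_dist p /\
  forall x, p x = \prod_(v : I) (marg p (v |: pa G v) x / marg p (pa G v) x).

(* Variables O (dot-cup) {S}: encoded as option O, with None = S. *)
Definition fdom (O : finType) (dom : O -> finType) (DS : finType)
  (v : option O) : finType :=
  match v with None => DS | Some o => dom o end.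

Definition join (O : finType) (dom : O -> finType) (DS : finType)
  (x : assign dom) (s : DS) : assign (fdom dom DS) :=
  finfun (fun v : option O =>
    match v as v' return fdom dom DS v' with
    | None => s
    | Some o => x o
    end).

Definition paS (O : finType) (G : rel (option O)) : {set O} :=
  [set o | G (Some o) None].

Definition induced (O : finType) (G : rel (option O)) : rel O :=
  fun u v => G (Some u) (Some v).

Definition BN_sel (R : realFieldType) (O : finType) (dom : O -> finType)
  (DS : finType) (G : rel (option O)) (shat : DS) (p : assign dom -> R) : Prop :=
  exists r : assign (fdom dom DS) -> R,
    BN G r /\ 0 < \sum_(x : assign dom) r (join x shat) /\
    forall x, p x = r (join x shat) / \sum_(x' : assign dom) r (join x' shat).

(* P[^C \in M[^C for M = BN(G'): conditional distributions of O\C given C,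
   written as functions of the full assignment x. *)
Definition BN_cond (R : realFieldType) (O : finType) (dom : O -> finType)
  (G' : rel O) (C : {set O}) (p : assign dom -> R) : Prop :=
  exists r : assign dom -> R,
    BN G' r /\ (forall x, 0 < marg r C x) /\
    forall x, p x / marg p C x = r x / marg r C x.

(* Main.v *)
Require Import Defs.
From HB Require Import structures.
From mathcomp Require Import all_boot all_order all_algebra.
From mathcomp Require Import ring lra.
Import Order.TTheory GRing.Theory Num.Theory.
Set Implicit Arguments. Unset Strict Implicit. Unset Printing Implicit Defensive.
Local Open Scope ring_scope.

Definition proj (O : finType) (dom : O -> finType) (DS : finType)
  (y : assign (fdom dom DS)) : assign dom :=
  @finfun O dom (fun o => y (Some o)).

Lemma join_proj (O : finType) (dom : O -> finType) (DS : finType)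
  (y : assign (fdom dom DS)) : join (proj y) (y None) = y.
Proof. by apply/ffunP => -[o|]; rewrite !ffunE. Qed.

Lemma proj_join (O : finType) (dom : O -> finType) (DS : finType)
  (x : assign dom) (s : DS) : proj (join x s) = x.
Proof. by apply/ffunP => o; rewrite !ffunE. Qed.

Lemma join_None (O : finType) (dom : O -> finType) (DS : finType)
  (x : assign dom) (s : DS) : join x s None = s.
Proof. by rewrite ffunE. Qed.

Lemma join_Some (O : finType) (dom : O -> finType) (DS : finType)
  (x : assign dom) (s : DS) o : join x s (Some o) = x o.
Proof. by rewrite ffunE. Qed.

Lemma sum_join (R : realFieldType) (O : finType) (dom : O -> finType) (DS : finType)
  (F : assign (fdom dom DS) -> R) :
  \sum_y F y = \sum_x \sum_s F (join x s).
Proof.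
rewrite pair_big /=.
rewrite (reindex (fun p : assign dom * DS => join p.1 p.2)) //=.
exists (fun y => (proj y, y None)) => [[x s] _|y _] /=.
  by rewrite proj_join join_None.
by rewrite join_proj.
Qed.

Lemma prod_option (R : realFieldType) (O : finType) (F : option O -> R) :
  \prod_v F v = F None * \prod_o F (Some o).
Proof.
rewrite (bigD1 None) //=; congr (_ * _).
rewrite (reindex_omap Some id) //=; last by case.
by apply: eq_bigl => o; rewrite eqxx.
Qed.

Lemma forall_join (O : finType) (dom : O -> finType) (DS : finType)
  (A : {set option O}) (x x' : assign dom) (s s' : DS) :
  [forall i in A, join x' s' i == join x s i] =
  [forall o in [set o | Some o \in A], x' o == x o] && ((None \in A) ==> (s' == s)).
Proof.
apply/forallP/andP => [H|[/forallP H1 H2] [o|]].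
- split.
    apply/forallP => o; apply/implyP; rewrite inE => Ho.
    by have := implyP (H (Some o)) Ho; rewrite !join_Some.
  apply/implyP => Hn; by have := implyP (H None) Hn; rewrite !join_None.
- apply/implyP => Ho; rewrite !join_Some.
  by apply: (implyP (H1 o)); rewrite inE.
- by apply/implyP => Hn; rewrite !join_None (implyP H2 Hn).
Qed.

Lemma marg_join (R : realFieldType) (O : finType) (dom : O -> finType) (DS : finType)
  (F : assign (fdom dom DS) -> R) (A : {set option O}) (x : assign dom) (s : DS) :
  marg F A (join x s) =
  \sum_(x' : assign dom | [forall o in [set o | Some o \in A], x' o == x o])
     (if None \in A then F (join x' s) else \sum_s' F (join x' s')).
Proof.
rewrite /marg big_mkcond sum_join [RHS]big_mkcond /=.
apply: eq_bigr => x' _.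
under eq_bigr => s' _ do rewrite forall_join.
case: [forall _ in _, _]; last by rewrite big1 //; case: ifP.
case: ifP => HA /=.
  rewrite (bigD1 s) //= eqxx big1 ?addr0 // => s' /negbTE ->; done.
by apply: eq_bigr.
Qed.

Definition rO (R : realFieldType) (O : finType) (dom : O -> finType) (DS : finType)
  (F : assign (fdom dom DS) -> R) (x : assign dom) : R := \sum_s F (join x s).

Lemma marg_noS (R : realFieldType) (O : finType) (dom : O -> finType) (DS : finType)
  (F : assign (fdom dom DS) -> R) (A : {set option O}) (x : assign dom) (s : DS) :
  None \notin A ->
  marg F A (join x s) = marg (rO F) [set o | Some o \in A] x.
Proof. by move=> HA; rewrite marg_join (negbTE HA). Qed.

Lemma marg_S (R : realFieldType) (O : finType) (dom : O -> finType) (DS : finType)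
  (F : assign (fdom dom DS) -> R) (A : {set option O}) (x : assign dom) (s : DS) :
  None \in A ->
  marg F A (join x s) =
  \sum_(x' : assign dom | [forall o in [set o | Some o \in A], x' o == x o]) F (join x' s).
Proof. by move=> HA; rewrite marg_join HA. Qed.

Lemma marg_agree (R : realFieldType) (I : finType) (dom : I -> finType)
  (p : assign dom -> R) (A : {set I}) (x x' : assign dom) :
  [forall i in A, x' i == x i] -> marg p A x' = marg p A x.
Proof.
move=> /forallP H; apply: eq_bigl => y; apply: eq_forallb => i.
case Hi: (i \in A) => //=.
by have := implyP (H i) Hi => /eqP ->.
Qed.

Lemma prod_Some (R : realFieldType) (O : finType) (dom : O -> finType) (DS : finType)
  (G : rel (option O)) (Hnochild : forall v, ~~ G None v)
  (F : assign (fdom dom DS) -> R) (x : assign dom) (s : DS) :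
  \prod_o (marg F (Some o |: pa G (Some o)) (join x s) / marg F (pa G (Some o)) (join x s))
  = \prod_o (marg (rO F) (o |: pa (induced G) o) x / marg (rO F) (pa (induced G) o) x).
Proof.
apply: eq_bigr => o _.
rewrite !marg_noS; first last.
  all: rewrite ?inE /=; try exact: Hnochild.
have -> : [set o0 | Some o0 \in Some o |: pa G (Some o)] = o |: pa (induced G) o.
  by apply/setP => oo; rewrite !inE.
have -> : [set o0 | Some o0 \in pa G (Some o)] = pa (induced G) o.
  by apply/setP => oo; rewrite !inE.
by [].
Qed.

Lemma None_den (R : realFieldType) (O : finType) (dom : O -> finType) (DS : finType)
  (G : rel (option O)) (Hnochild : forall v, ~~ G None v)
  (F : assign (fdom dom DS) -> R) (x : assign dom) (s : DS) :
  marg F (pa G None) (join x s) = marg (rO F) (paS G) x.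
Proof.
rewrite marg_noS; last by rewrite inE (negbTE (Hnochild _)).
by congr (marg _ _ _); apply/setP => o; rewrite !inE.
Qed.

Lemma None_num (R : realFieldType) (O : finType) (dom : O -> finType) (DS : finType)
  (G : rel (option O))
  (F : assign (fdom dom DS) -> R) (x : assign dom) (s : DS) :
  marg F (None |: pa G None) (join x s) =
  \sum_(x' : assign dom | [forall o in paS G, x' o == x o]) F (join x' s).
Proof.
rewrite marg_S; last by rewrite !inE.
apply: eq_bigl => x'; apply: eq_forallb => o; by rewrite !inE.
Qed.

Lemma le_sum1 (R : realFieldType) (I : finType) (F : I -> R) i :
  (forall j, 0 <= F j) -> F i <= \sum_j F j.
Proof.
move=> H; rewrite (bigD1 i) //= lerDl; exact: sumr_ge0.
Qed.

Lemma dir1 (R : realFieldType) (O : finType) (dom : O -> finType)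
  (DS : finType) (shat : DS) (G : rel (option O))
  (Hnochild : forall v, ~~ G None v)
  (p : assign dom -> R)
  (Hpos : forall x, 0 < marg p (paS G) x) :
  BN_sel G shat p -> BN_cond (induced G) (paS G) p.
Proof.
move=> [r [[[Hr0 Hr1] HBN] [HK Hpx]]].
set K := \sum_x r (join x shat) in HK Hpx.
set C := paS G.
pose M (x : assign dom) (s : DS) := \sum_(x' : assign dom | [forall o in C, x' o == x o]) r (join x' s).
pose m x := marg (rO r) C x.
pose P x := \prod_o (marg (rO r) (o |: pa (induced G) o) x /
                      marg (rO r) (pa (induced G) o) x).
have F2 (x : assign dom) (s : DS) : r (join x s) = M x s / m x * P x.
  by rewrite {1}HBN prod_option prod_Some // None_num None_den.
have F4 (x : assign dom) : \sum_s M x s = m x.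
  by rewrite /m /marg /rO exchange_big.
have HM0 (x : assign dom) (s : DS) : 0 <= M x s by apply: sumr_ge0.
have HpM (x : assign dom) : marg p C x = M x shat / K.
  by rewrite /marg /M mulr_suml; apply: eq_bigr => x' _; rewrite Hpx.
have HMpos (x : assign dom) : 0 < M x shat.
  by have := Hpos x; rewrite -/C HpM pmulr_lgt0 // invr_gt0.
have Hm (x : assign dom) : 0 < m x.
  by rewrite -F4; apply: lt_le_trans (HMpos x) (le_sum1 _ _).
have F6 (x : assign dom) : rO r x = P x.
  rewrite /rO; under eq_bigr do rewrite F2.
  by rewrite -mulr_suml -mulr_suml F4 divff ?mul1r // gt_eqF.
exists (rO r); split; [split; [split|]|split].
- by move=> x; apply: sumr_ge0.
- by rewrite /rO -sum_join.
- by move=> x; rewrite F6.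
- exact: Hm.
move=> x; rewrite Hpx HpM F2 -/(m x) -F6.
have := HMpos x; have := Hm x; move: (M x shat) (m x) (rO r x) => a b c ha hb.
field; rewrite ?gt_eqF //.
Qed.

Lemma dir2 (R : realFieldType) (O : finType) (dom : O -> finType)
  (DS : finType) (HDS : (1 < #|DS|)%N) (shat : DS) (G : rel (option O))
  (Hnochild : forall v, ~~ G None v)
  (p : assign dom -> R) (Hp : is_dist p)
  (Hpos : forall x, 0 < marg p (paS G) x) :
  BN_cond (induced G) (paS G) p -> BN_sel G shat p.
Proof.
move=> [r [[[Hr0 Hr1] HBN] [Hm Hratio]]].
case: Hp => Hp0 Hp1.
set C := paS G in Hpos Hm Hratio.
have [s1 Hs1] : exists s1, s1 != shat.
  case: (pickP (fun s => s != shat)) => [s1 H|H]; first by exists s1.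
  exfalso; move: HDS; apply/negP; rewrite -leqNgt.
  rewrite -(card1 shat); apply: subset_leq_card; apply/subsetP => s _.
  by rewrite inE; have := H s => /negbFE.
pose pi (x : assign dom) := marg p C x.
pose m (x : assign dom) := marg r C x.
pose S := \sum_x pi x / m x.
have HS : 0 <= S by apply: sumr_ge0 => x _; apply: divr_ge0; apply/ltW.
pose c := (1 + S)^-1.
have Hc : 0 < c by rewrite invr_gt0; lra.
pose q (x : assign dom) := c * (pi x / m x).
have Hq0 (x : assign dom) : 0 <= q x by apply: mulr_ge0; [apply/ltW|apply: divr_ge0; apply/ltW].
have Hq1 (x : assign dom) : q x <= 1.
  rewrite /q /c mulrC ler_pdivrMr ?mul1r; last lra.
  have : pi x / m x <= S.
    by apply: le_sum1 => y; apply: divr_ge0; apply/ltW.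
  lra.
pose h (x : assign dom) (s : DS) := (s == shat)%:R * q x + (s == s1)%:R * (1 - q x).
have Hh0 (x : assign dom) (s : DS) : 0 <= h x s.
  by apply: addr_ge0; apply: mulr_ge0; rewrite ?ler0n ?subr_ge0.
have Hh1 (x : assign dom) : \sum_s h x s = 1.
  rewrite big_split /= -!mulr_suml.
  have E a : \sum_(s : DS) (s == a)%:R = 1 :> R.
    by rewrite (bigD1 a) //= eqxx big1 ?addr0 // => s /negbTE ->.
  rewrite !E; lra.
have Hagree (x x' : assign dom) (s : DS) : [forall o in C, x' o == x o] -> h x' s = h x s.
  by move=> Hx; rewrite /h /q /pi /m !(marg_agree _ Hx).
pose rt (y : assign (fdom dom DS)) := r (proj y) * h (proj y) (y None).
have Hrt (x : assign dom) (s : DS) : rt (join x s) = r x * h x s by rewrite /rt proj_join join_None.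
have HrO : rO rt =1 r.
  by move=> x; rewrite /rO; under eq_bigr do rewrite Hrt; rewrite -mulr_sumr Hh1 mulr1.
have HrtS (x : assign dom) : rt (join x shat) = c * p x.
  rewrite Hrt /h eqxx eq_sym (negbTE Hs1) mul1r mul0r addr0 /q.
  have Hpx := Hratio x; have Hpi := Hpos x; have Hmx := Hm x.
  rewrite -/(pi x) -/(m x) in Hpx Hpi Hmx *.
  move: (pi x) (m x) (p x) (r x) Hpx Hpi Hmx => a b d e Hpx Ha Hb.
  have -> : d = e / b * a.
    by rewrite -Hpx mulrVK // unitfE gt_eqF.
  field; rewrite gt_eqF //.
have HK : \sum_x rt (join x shat) = c.
  by under eq_bigr do rewrite HrtS; rewrite -mulr_sumr Hp1 mulr1.
exists rt; split; [split; [split|]|split].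
- by move=> y; apply: mulr_ge0.
- rewrite sum_join; transitivity (\sum_x rO rt x) => //.
  by under eq_bigr => x _ do rewrite HrO.
- move=> y; rewrite -(join_proj y); move: (proj y) (y None) => x s.
  rewrite prod_option prod_Some // None_num None_den //.
  have Em A (z : assign dom) : marg (rO rt) A z = marg r A z.
    by apply: eq_bigr => yy _; rewrite HrO.
  under eq_bigr do rewrite !Em.
  rewrite -HBN Em.
  have -> : \sum_(x' : assign dom | [forall o in paS G, x' o == x o]) rt (join x' s)
            = m x * h x s.
    rewrite /m /marg mulr_suml; apply: eq_bigr => x' Hx'.
    by rewrite Hrt (Hagree x x').
  rewrite Hrt -/C -/(m x).
  have := Hm x; rewrite -/C -/(m x) => Hmx.
  by rewrite [m x * _]mulrC mulfK ?gt_eqF // mulrC.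
- by rewrite HK.
- by move=> x; rewrite HK HrtS mulrC mulKf // gt_eqF.
Qed.

Theorem theorem4 (R : realFieldType) (O : finType) (dom : O -> finType)
  (DS : finType) (HDS : (1 < #|DS|)%N) (shat : DS) (G : rel (option O))
  (HG : acyclic G) (Hnochild : forall v, ~~ G None v)
  (p : assign dom -> R) (Hp : is_dist p)
  (Hpos : forall x, 0 < marg p (paS G) x) :
  BN_sel G shat p <-> BN_cond (induced G) (paS G) p.
Proof.
split; [exact: dir1 | exact: dir2].
Qed.
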